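(* Let $N, R \in \mathbb{N}$ and let $g_1,\dots,g_R : [N]\to[N]$ be arbitrary bijections (the single-hop factual recall problem with shared attributes). Then there is a $1$-layer transformer whose MLP has $3$ layers and width $R$, with (learned) embedding dimension $d = 4R\log(N)+1$, that correctly solves the single-hop factual recall problem, i.e. on every input $(s, r)\in[N]\times[R]$ it correctly predicts $y = g_r(s)$. The same can also be achieved without an MLP, by a $1$-layer transformer using multi-head attention with $R$ attention heads of head dimension $d_h = 4\log(N)$ and embedding dimension $d = 4R\log(N) + 4\log(R) + 1$.
   Context: Write $[N]=\{1,\dots,N\}$. Subjects are $[N]$, relations are $[R]$, and each relation $r$ has a bijection $g_r:[N]\to[N]$; attributes live in the same set $[N]$ as subjects (shared codomain). The model is an autoregressive transformer over the vocabulary $[N]\cup[R]$; it receives the sequence $(s, r)$ and must predict the next token $y=g_r(s)$. The token embeddings are free (learnable) vectors in $\mathbb{R}^d$. A transformer layer acts on $X\in\mathbb{R}^{d\times n}$ (columns = token embeddings): each head $h$ computes $A^{(h)}=\mathrm{softmax}((W_K^{(h)}X)^\top(W_Q^{(h)}X))$ (causal), the attention output is $Z=\sum_h W_V^{(h)}X(A^{(h)})^\top$, then $\tilde X = Z + X$, and finally $X' = \tilde X + \mathrm{MLP}(\tilde X)$, where the MLP acts on each column independently and is a ReLU network of the stated number of layers and hidden width. No normalization layers are used. *)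

(* Defs.v *)
From HB Require Import structures.
From mathcomp Require Import all_boot all_order all_algebra.
From mathcomp Require Import all_classical all_reals all_analysis.
Set Implicit Arguments. Unset Strict Implicit. Unset Printing Implicit Defensive.
Import Order.TTheory GRing.Theory Num.Theory.
Local Open Scope ring_scope.

(* Vocabulary [N] ∪ [R]: subjects/attributes 'I_N (left), relations 'I_nR (right). *)
Definition token (N nR : nat) : finType := ('I_N + 'I_nR)%type.

Section Transformer.
Variable R : realType.

Definition relu (x : R) : R := Num.max x 0.
Definition reluv m (v : 'cV[R]_m) : 'cV[R]_m := map_mx relu v.

Definition dotv m (u v : 'cV[R]_m) : R := \sum_(k < m) u k 0 * v k 0.

Record attn_head (d dh : nat) := Head {
  WK : 'M[R]_(dh, d);
  WQ : 'M[R]_(dh, d);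
  WV : 'M[R]_(d, d) }.

(* Causal softmax attention pattern: A j i = weight of key position i for
   query position j, i.e. softmax over i <= j of <W_K x_i, W_Q x_j>;
   here S = (W_K X)^T (W_Q X), so S i j = <W_K x_i, W_Q x_j>. *)
Definition causal_attn d dh n (h : attn_head d dh) (X : 'M[R]_(d, n)) : 'M[R]_(n, n) :=
  let S := (WK h *m X)^T *m (WQ h *m X) in
  \matrix_(j < n, i < n)
    (if (i <= j)%N
     then expR (S i j) / \sum_(i' < n | (i' <= j)%N) expR (S i' j)
     else 0).

Definition mh_attn d dh H n (hs : 'I_H -> attn_head d dh) (X : 'M[R]_(d, n))
  : 'M[R]_(d, n) :=
  \sum_(h < H) (WV (hs h) *m X *m (causal_attn (hs h) X)^T).

Record mlp3 (d w : nat) := MLP3 {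
  W1 : 'M[R]_(w, d); b1 : 'cV[R]_w;
  W2 : 'M[R]_(w, w); b2 : 'cV[R]_w;
  W3 : 'M[R]_(d, w); b3 : 'cV[R]_d }.

Definition mlp3_apply d w (m : mlp3 d w) (v : 'cV[R]_d) : 'cV[R]_d :=
  W3 m *m reluv (W2 m *m reluv (W1 m *m v + b1 m) + b2 m) + b3 m.

Definition mlp3_cols d w n (m : mlp3 d w) (X : 'M[R]_(d, n)) : 'M[R]_(d, n) :=
  \matrix_(k < d, j < n) mlp3_apply m (col j X) k 0.

Definition layer_mlp d dh H w n (hs : 'I_H -> attn_head d dh) (m : mlp3 d w)
  (X : 'M[R]_(d, n)) : 'M[R]_(d, n) :=
  let Xt := mh_attn hs X + X in Xt + mlp3_cols m Xt.

Definition layer_nomlp d dh H n (hs : 'I_H -> attn_head d dh) (X : 'M[R]_(d, n))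
  : 'M[R]_(d, n) := mh_attn hs X + X.

Definition input_seq N nR d (E : token N nR -> 'cV[R]_d) (s : 'I_N) (r : 'I_nR)
  : 'M[R]_(d, 2) :=
  \matrix_(k < d, j < 2) (if j == 0 :> nat then E (inl s) k 0 else E (inr r) k 0).

(* Next-token prediction from the last position with tied (embedding)
   output vectors: token y is predicted iff its logit <E y, x'_last> is
   strictly larger than the logit of every other token of the vocabulary. *)
Definition predicts N nR d (E : token N nR -> 'cV[R]_d) (Xout : 'M[R]_(d, 2))
  (y : token N nR) : Prop :=
  forall t : token N nR, t != y ->
    dotv (E t) (col ord_max Xout) < dotv (E y) (col ord_max Xout).

End Transformer.

Definition clog2 (n : nat) : nat := up_log 2 n.

(* Main.v *)
Require Import Defs.
From HB Require Import structures.
From mathcomp Require Import all_boot all_order all_algebra.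
From mathcomp Require Import all_classical all_reals all_analysis.
From mathcomp Require Import zify ring lra.
Set Implicit Arguments. Unset Strict Implicit. Unset Printing Implicit Defensive.
Import Order.TTheory GRing.Theory Num.Theory.
Local Open Scope ring_scope.

Section Aux.
Variable R : realType.

Lemma sum1 d (F : nat -> R) i : (i < d)%N -> (forall k, k != i -> F k = 0) ->
  \sum_(k < d) F k = F i.
Proof.
move=> Hi H; rewrite (bigD1 (Ordinal Hi)) //= big1 ?addr0 // => k Hk; apply: H.
by apply: contra Hk => /eqP e; apply/eqP/val_inj.
Qed.

Lemma sum2 d (F : nat -> R) i j : (i < d)%N -> (j < d)%N -> i != j ->
  (forall k, k != i -> k != j -> F k = 0) ->
  \sum_(k < d) F k = F i + F j.
Proof.
move=> Hi Hj Hij H; rewrite (bigD1 (Ordinal Hi)) //= (bigD1 (Ordinal Hj)) /=; last first.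
  by apply: contra Hij => /eqP e; apply/eqP; move: e => [->].
rewrite big1 ?addr0 // => k /andP[Hk1 Hk2]; apply: H.
  by apply: contra Hk1 => /eqP e; apply/eqP/val_inj.
by apply: contra Hk2 => /eqP e; apply/eqP/val_inj.
Qed.

Lemma sum2c (F : 'I_2 -> R) : \sum_(i < 2 | (i <= 1)%N) F i = F ord0 + F ord_max.
Proof.
rewrite big_mkcond /= !big_ord_recl big_ord0 addr0 /=.
by congr (_ + _); congr F; apply: val_inj.
Qed.

Lemma attn_last d dh H (hs : 'I_H -> attn_head R d dh) (X : 'M[R]_(d,2)) k :
  mh_attn hs X k ord_max = \sum_(h < H)
   (((WV (hs h) *m X) k ord0 * expR (\sum_a (WK (hs h) *m X) a ord0 * (WQ (hs h) *m X) a ord_max)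
   + (WV (hs h) *m X) k ord_max * expR (\sum_a (WK (hs h) *m X) a ord_max * (WQ (hs h) *m X) a ord_max)) /
   (expR (\sum_a (WK (hs h) *m X) a ord0 * (WQ (hs h) *m X) a ord_max)
   + expR (\sum_a (WK (hs h) *m X) a ord_max * (WQ (hs h) *m X) a ord_max))).
Proof.
rewrite /mh_attn summxE; apply: eq_bigr => h _.
rewrite /causal_attn.
set M := WV (hs h) *m X; set KX := WK (hs h) *m X; set QX := WQ (hs h) *m X.
rewrite mxE !big_ord_recl big_ord0 addr0 !mxE /=.
rewrite sum2c.
have hS i : (KX^T *m QX) i ord_max = \sum_a KX a i * QX a ord_max.
  by rewrite mxE; apply: eq_bigr => a _; rewrite mxE.
rewrite !hS.
have e1 : lift ord0 ord0 = ord_max :> 'I_2 by apply: val_inj.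
rewrite e1.
have hT i : \sum_(j < dh) KX^T i j * QX j ord_max = \sum_a KX a i * QX a ord_max.
  by apply: eq_bigr => a _; rewrite mxE.
rewrite !hT.
by rewrite mulrDl !mulrA.
Qed.


Lemma sum1o d (F : 'I_d -> R) i (Hi : (i < d)%N) :
  (forall k : 'I_d, val k != i -> F k = 0) -> \sum_k F k = F (Ordinal Hi).
Proof.
move=> H; rewrite (bigD1 (Ordinal Hi)) //= big1 ?addr0 // => k Hk; apply: H.
Qed.

Lemma sum2o d (F : 'I_d -> R) i j (Hi : (i < d)%N) (Hj : (j < d)%N) : i != j ->
  (forall k : 'I_d, val k != i -> val k != j -> F k = 0) ->
  \sum_k F k = F (Ordinal Hi) + F (Ordinal Hj).
Proof.
move=> Hij H; rewrite (bigD1 (Ordinal Hi)) //= (bigD1 (Ordinal Hj)) /=; last first.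
  by apply: contra Hij => /eqP e; apply/eqP; move: e => [->].
rewrite big1 ?addr0 // => k /andP[Hk1 Hk2]; apply: H.
  by apply: contra Hk1 => /eqP e; apply/eqP/val_inj.
by apply: contra Hk2 => /eqP e; apply/eqP/val_inj.
Qed.

End Aux.

Lemma key (R : realType) (e G T a b : R) : 0 < e -> e * (1 + T) <= 1 -> 0 <= G -> 2 * G <= T ->
  0 <= a -> 0 <= b -> a + b <= T -> (a + 1 <= b \/ b + 1 <= a) ->
  b * ((2 * a + 2 * e * G) / (1 + e)) + (3 - b ^+ 2) <
  a * ((2 * a + 2 * e * G) / (1 + e)) + (3 - a ^+ 2).
Proof.
move=> He HeT HG HGT Ha Hb Hab Hu.
set m := (_ / _).
have Hm : m * (1 + e) = 2 * a + 2 * e * G by rewrite /m mulfVK // gt_eqF // ltr_wpDr // ltW.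
rewrite -subr_gt0.
have -> : a * m + (3 - a ^+ 2) - (b * m + (3 - b ^+ 2)) = ((a - b) * (m * (1 + e)) - (1 + e) * (a ^+ 2 - b ^+ 2)) / (1 + e).
  by field; rewrite gt_eqF // ltr_wpDr // ltW.
apply: divr_gt0; last by lra.
rewrite Hm.
have Hw1 : e * (2 * G - a - b) < 1 by nra.
have Hw2 : - 1 < e * (2 * G - a - b) by nra.
have -> : (a - b) * (2 * a + 2 * e * G) - (1 + e) * (a ^+ 2 - b ^+ 2) = (a - b) * ((a - b) + e * (2 * G - a - b)) by ring.
case: Hu => Hu; nra.
Qed.

Lemma key2 (R : realType) (e G a : R) : 0 < e -> e <= 1 -> 0 <= G -> 0 <= a ->
  2 < a * ((2 * a + 2 * e * G) / (1 + e)) + (3 - a ^+ 2).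
Proof.
move=> He He1 HG Ha.
set m := (_ / _).
have Hm : m * (1 + e) = 2 * a + 2 * e * G by rewrite /m mulfVK // gt_eqF // ltr_wpDr // ltW.
have : a <= m.
  rewrite -(ler_pM2r (_ : 0 < 1 + e)); last by lra.
  rewrite Hm; nra.
nra.
Qed.

Section Constr.
Variables (R : realType) (N nR : nat) (g : 'I_nR -> 'I_N -> 'I_N).

Definition gv (j : nat) (y : 'I_N) : R :=
  match (insub j : option 'I_nR) with Some h => (g h y : nat)%:R | None => 0 end.

Lemma gvE (h : 'I_nR) y : gv h y = (g h y : nat)%:R.
Proof. by rewrite /gv valK. Qed.

Definition fsub (z : bool) (y : 'I_N) (k : nat) : R :=
  if k == 0%N then (y : nat)%:R else if k == 1%N then 3 - (y : nat)%:R ^+ 2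
  else if (2 <= k < 2 + nR)%N then gv (k - 2) y
  else if z && (k == 2 + 2 * nR)%N then 1 else 0.

Definition frel (r : 'I_nR) (k : nat) : R :=
  if k == 1%N then 1 else if k == (2 + nR + r)%N then 1 else 0.

Definition Emb d z : token N nR -> 'cV[R]_d := fun t =>
  \col_(k < d) (match t with inl y => fsub z y k | inr r => frel r k end).

Definition WV1 d : 'M[R]_(d, d) :=
  \matrix_(a, k) (if (2 + 2 * nR <= a < 2 + 3 * nR)%N && ((k : nat) == a - 2 * nR)%N then 2 else 0).

Definition hs1 d : 'I_1 -> attn_head R d d := fun _ => Head 0 0 (WV1 d).

Definition xt (s : 'I_N) (r : 'I_nR) (k : nat) : R :=
  (if (2 + 2 * nR <= k < 2 + 3 * nR)%N then gv (k - 2 - 2 * nR) s else 0) + frel r k.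

Ltac crush := repeat (case: ifP => /= ?); rewrite ?mul0r ?mulr0 ?add0r ?addr0 //; try lia.

Lemma WV1X d s r (k : 'I_d) (i : 'I_2) :
  (WV1 d *m input_seq (Emb d false) s r) k i =
  if (2 + 2 * nR <= k < 2 + 3 * nR)%N && (val i == 0%N) then 2 * gv (k - 2 - 2 * nR) s else 0.
Proof.
rewrite mxE; case: (boolP (2 + 2 * nR <= k < 2 + 3 * nR)%N) => Hc; last first.
  by rewrite /=; apply: big1 => l _; rewrite !mxE (negbTE Hc) mul0r.
have Hi : (k - 2 * nR < d)%N by have := ltn_ord k; lia.
rewrite (sum1o Hi); last first.
  by move=> l Hl; rewrite !mxE Hc /= (negbTE Hl) mul0r.
rewrite !mxE /= Hc eqxx /=.
case: ifP => Hi0 /=.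
  by rewrite /fsub; crush; congr (_ * gv _ _); lia.
by rewrite /frel; crush.
Qed.


Lemma Xt1 d s r (k : 'I_d) :
  (mh_attn (hs1 d) (input_seq (Emb d false) s r) + input_seq (Emb d false) s r) k ord_max
  = xt s r k.
Proof.
rewrite mxE attn_last big_ord1 /=.
set X := input_seq _ s r.
have z0 i : \sum_(a < d) (0 *m X) a i * (0 *m X) a ord_max = 0.
  by apply: big1 => a _; rewrite mul0mx mxE mul0r.
rewrite !z0 expR0 !WV1X /= !mulr1.
have e10 : (1%N == 0%N) = false by [].
rewrite eqxx e10 andbT andbF addr0.
rewrite /X !mxE /= /xt.
case: ifP => _; last by rewrite !mul0r.
by congr (_ + _); field.
Qed.

Definition mlp1 d : mlp3 R d nR :=
  MLP3 (\matrix_(h, k) (if (k : nat) == (2 + 2 * nR + h)%N then 1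
                        else if (k : nat) == (2 + nR + h)%N then (N%:R : R) else 0))
       (const_mx (- N%:R)) 1%:M 0
       (\matrix_(k, h) (if (k : nat) == 0%N then 2 else 0)) 0.

Lemma relu_id (x : R) : 0 <= x -> relu x = x.
Proof. by move=> h; rewrite /relu max_l. Qed.
Lemma relu_neg (x : R) : x <= 0 -> relu x = 0.
Proof. by move=> h; rewrite /relu max_r. Qed.
Lemma relu_ge0 (x : R) : 0 <= relu x.
Proof. by rewrite /relu le_max lexx orbT. Qed.

Lemma mlp1_out d s r (Hd : (0 < nR)%N -> (3 * nR + 2 <= d)%N) (v : 'cV[R]_d)
  (Hv : forall k : 'I_d, v k 0 = xt s r k) (k : 'I_d) :
  mlp3_apply (mlp1 d) v k 0 = if (k : nat) == 0%N then 2 * (g r s : nat)%:R else 0.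
Proof.
have HnR : (0 < nR)%N by apply: leq_ltn_trans (ltn_ord r).
have {}Hd := Hd HnR.
have H1 (h : 'I_nR) : (reluv (W1 (mlp1 d) *m v + b1 (mlp1 d))) h 0 =
    if h == r then (g r s : nat)%:R else 0.
  have Hi : (2 + 2 * nR + h < d)%N by have := ltn_ord h; lia.
  have Hj : (2 + nR + h < d)%N by have := ltn_ord h; lia.
  rewrite !mxE (sum2o Hi Hj); last 2 first.
  - by lia.
  - by move=> l Hl1 Hl2; rewrite !mxE (negbTE Hl1) (negbTE Hl2) mul0r.
  rewrite !mxE /= eqxx.
  have -> : ((2 + nR + h)%N == (2 + 2 * nR + h)%N) = false by lia.
  rewrite eqxx !Hv /xt /frel /=.
  have hh := ltn_ord h; have hr := ltn_ord r.
  have -> : (2 + 2 * nR <= 2 + 2 * nR + h < 2 + 3 * nR)%N = true by lia.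
  have -> : (2 + 2 * nR + h - 2 - 2 * nR)%N = h by lia.
  have -> : ((2 + 2 * nR + h)%N == (2 + nR + r)%N) = false by lia.
  have -> : (2 + 2 * nR <= 2 + nR + h < 2 + 3 * nR)%N = false by lia.
  have -> : ((2 + nR + h)%N == (2 + nR + r)%N) = (h == r).
    by apply/eqP/eqP => [e|->] //; apply: val_inj => /=; lia.
  rewrite gvE addr0 add0r mul1r.
  case: eqP => [->|_].
    by rewrite mulr1 addrK relu_id.
  rewrite mulr0 addr0 relu_neg // subr_le0 ler_nat; exact: ltnW (ltn_ord _).
have H2 (h : 'I_nR) : (reluv (W2 (mlp1 d) *m reluv (W1 (mlp1 d) *m v + b1 (mlp1 d)) + b2 (mlp1 d))) h 0 =
    if h == r then (g r s : nat)%:R else 0.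
  rewrite /= mul1mx addr0 mxE H1 relu_id //; case: eqP => // _.
rewrite /mlp3_apply mxE [X in _ + X]mxE addr0 mxE.
under eq_bigr do rewrite H2 mxE.
rewrite (bigD1 r) //= eqxx big1 ?addr0 //; last first.
  by move=> h /negbTE ->; rewrite mulr0.
by case: eqP; rewrite ?mul0r.
Qed.


Definition xo1 s r (k : nat) : R := xt s r k + (if k == 0%N then 2 * (g r s : nat)%:R else 0).

Lemma dot_sub d (z : bool) (y : 'I_N) (x : nat -> R) (Hd : (1 < d)%N) :
  (forall k, (2 <= k < 2 + nR)%N -> x k = 0) ->
  (z -> forall k, k = (2 + 2 * nR)%N -> x k = 0) ->
  dotv (Emb d z (inl y)) (\col_(k < d) x k) = (y : nat)%:R * x 0%N + (3 - (y : nat)%:R ^+ 2) * x 1%N.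
Proof.
move=> HA HZ; rewrite /dotv (sum2o (i := 0%N) (j := 1%N) (ltn_trans (ltnSn 0) Hd) Hd) //; last first.
  move=> k Hk0 Hk1; rewrite !mxE /fsub (negbTE Hk0) (negbTE Hk1).
  case: ifP => Hk; first by rewrite HA ?mulr0.
  case: ifP => Hz; last by rewrite mul0r.
  by case/andP: Hz => Hz /eqP Hk2; rewrite (HZ Hz _ Hk2) mulr0.
by rewrite !mxE.
Qed.

Lemma dot_rel d z (r' : 'I_nR) (x : nat -> R) (Hd : (2 + 2 * nR <= d)%N) :
  dotv (Emb d z (inr r')) (\col_(k < d) x k) = x 1%N + x (2 + nR + r')%N.
Proof.
have hr := ltn_ord r'.
have Hj : (2 + nR + r' < d)%N by lia.
have Hi : (1 < d)%N by lia.
rewrite /dotv (sum2o Hi Hj); last 2 first.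
- by lia.
- by move=> k Hk0 Hk1; rewrite !mxE /frel (negbTE Hk0) (negbTE Hk1) mul0r.
rewrite !mxE /frel /= eqxx.
by rewrite !mul1r.
Qed.

Lemma part1 d (Hd : (0 < nR)%N -> (3 * nR + 2 <= d)%N) :
  exists (E : token N nR -> 'cV[R]_d) (hs : 'I_1 -> attn_head R d d) (m : mlp3 R d nR),
     forall (s : 'I_N) (r : 'I_nR),
       predicts E (layer_mlp hs m (input_seq E s r)) (inl (g r s)).
Proof.
exists (Emb d false), (hs1 d), (mlp1 d) => s r.
have HnR : (0 < nR)%N by apply: leq_ltn_trans (ltn_ord r).
have Hd' := Hd HnR.
have Hc : col ord_max (layer_mlp (hs1 d) (mlp1 d) (input_seq (Emb d false) s r))
          = \col_(k < d) xo1 s r k.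
  apply/matrixP => k j; rewrite mxE /layer_mlp mxE mxE Xt1 /mlp3_cols mxE (mlp1_out (s := s) (r := r)) //.
  by move=> k0; rewrite mxE Xt1.
rewrite /predicts Hc => t Ht.
have hr := ltn_ord r.
rewrite dot_sub; last 3 first.
- by lia.
- by move=> k Hk; rewrite /xo1 /xt /frel; crush.
- by [].
have e0 : xo1 s r 0 = 2 * (g r s : nat)%:R by rewrite /xo1 /xt /frel /= !add0r.
have e1 : xo1 s r 1 = 1 by rewrite /xo1 /xt /frel /= add0r addr0.
rewrite e0 e1.
case: t Ht => [y|r'] Ht.
  rewrite dot_sub; last 3 first.
  - by lia.
  - by move=> k Hk; rewrite /xo1 /xt /frel; crush.
  - by [].
  have Hy : (y : nat) != g r s by apply: contra Ht => /eqP e; apply/eqP; congr inl; apply: val_inj.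
  rewrite e0 e1 -subr_gt0 !mulr1.
  have -> : (g r s)%:R * (2 * (g r s)%:R) + (3 - (g r s)%:R ^+ 2) -
     ((y : nat)%:R * (2 * (g r s)%:R) + (3 - (y : nat)%:R ^+ 2)) = ((g r s : nat)%:R - (y : nat)%:R) ^+ 2 :> R.
    by ring.
  by rewrite lt0r sqr_ge0 andbT sqrf_eq0 subr_eq0 eqr_nat eq_sym.
rewrite dot_rel; last by lia.
rewrite e1.
have Hb : xo1 s r (2 + nR + r') <= 1.
  have := ltn_ord r'; rewrite /xo1 /xt /frel /= => ?; crush.
apply: (le_lt_trans (lerD (lexx 1) Hb)).
rewrite mulr1.
have : 0 <= (g r s : nat)%:R ^+ 2 :> R by rewrite sqr_ge0.
lra.
Qed.

Definition TT : R := (2 * nR * N)%:R.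

Definition WK2 dh d (h : 'I_nR) : 'M[R]_(dh, d) :=
  \matrix_(a, k) (if (a : nat) == 0%N then (if (k : nat) == (2 + 2 * nR)%N then - TT else 0)
                 else if (a : nat) == 1%N then (if (k : nat) == (2 + nR + h)%N then - (TT + TT) else 0)
                 else 0).
Definition WQ2 dh d : 'M[R]_(dh, d) :=
  \matrix_(a, k) (if ((a : nat) < 2)%N && ((k : nat) == 1%N) then 1 else 0).
Definition WV2 d (h : 'I_nR) : 'M[R]_(d, d) :=
  \matrix_(k, l) (if ((k : nat) == 0%N) && ((l : nat) == (2 + h)%N) then 2 else 0).
Definition hs2 dh d : 'I_nR -> attn_head R d dh := fun h => Head (WK2 dh d h) (WQ2 dh d) (WV2 d h).

Section P2.
Variables (d dh : nat) (s : 'I_N) (r : 'I_nR).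
Hypothesis Hd : (2 * nR + 3 <= d)%N.
Hypothesis Hdh : (2 <= dh)%N.
Let X := input_seq (Emb d true) s r.

Lemma KX2 h (a : 'I_dh) (i : 'I_2) : (WK2 dh d h *m X) a i =
  if (a : nat) == 0%N then (if (i : nat) == 0%N then - TT else 0)
  else if (a : nat) == 1%N then (if (i : nat) == 0%N then 0 else if h == r then - (TT + TT) else 0)
  else 0.
Proof.
have hh := ltn_ord h; have hr := ltn_ord r.
rewrite mxE; case: ifP => Ha0.
  have Hi : (2 + 2 * nR < d)%N by lia.
  rewrite (sum1o Hi); last by move=> k Hk; rewrite !mxE Ha0 (negbTE Hk) mul0r.
  rewrite !mxE Ha0 /= eqxx; case: ifP => Hi0 /=.
    rewrite /fsub /=.
    have -> : (2 + 2 * nR < 2 + nR)%N = false by lia.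
    by rewrite eqxx mulr1.
  by rewrite /frel; crush.
case: ifP => Ha1.
  have Hi : (2 + nR + h < d)%N by lia.
  rewrite (sum1o Hi); last by move=> k Hk; rewrite !mxE Ha0 Ha1 (negbTE Hk) mul0r.
  rewrite !mxE Ha0 Ha1 /= eqxx; case: ifP => Hi0 /=.
    by rewrite /fsub; crush.
  rewrite /frel /=.
  have -> : ((2 + nR + h)%N == (2 + nR + r)%N) = (h == r).
    by apply/eqP/eqP => [e|->] //; apply: val_inj => /=; lia.
  by case: eqP; rewrite ?mulr1 ?mulr0.
by apply: big1 => k _; rewrite !mxE Ha0 Ha1 mul0r.
Qed.

Lemma QX2 (a : 'I_dh) : (WQ2 dh d *m X) a ord_max = if ((a : nat) < 2)%N then 1 else 0.
Proof.
have Hi : (1 < d)%N by lia.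
rewrite mxE (sum1o Hi); last by move=> k Hk; rewrite !mxE (negbTE Hk) andbF mul0r.
rewrite !mxE /= eqxx andbT /frel /=.
by case: ifP; rewrite ?mulr1 ?mul0r.
Qed.

Lemma VX2 h (k : 'I_d) (i : 'I_2) : (WV2 d h *m X) k i =
  if ((k : nat) == 0%N) && ((i : nat) == 0%N) then 2 * (g h s : nat)%:R else 0.
Proof.
have hh := ltn_ord h; have hr := ltn_ord r.
have Hi : (2 + h < d)%N by lia.
rewrite mxE (sum1o Hi); last by move=> l Hl; rewrite !mxE (negbTE Hl) andbF mul0r.
rewrite !mxE /= eqxx andbT.
case: ifP => Hk /=; last by rewrite mul0r.
case: ifP => Hi0 /=.
  rewrite /fsub /=.
  have -> : (2 + h < 2 + nR)%N = true by lia.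
  by rewrite /= subn2 /= gvE.
rewrite /frel; crush.
Qed.

Lemma S0_2 h : \sum_(a < dh) (WK2 dh d h *m X) a ord0 * (WQ2 dh d *m X) a ord_max = - TT.
Proof.
have H0 : (0 < dh)%N by lia.
rewrite (sum2o H0 Hdh) //; last by move=> a Ha0 Ha1; rewrite KX2 (negbTE Ha0) (negbTE Ha1) mul0r.
by rewrite !KX2 !QX2 /= mulr1 mul0r addr0.
Qed.

Lemma S1_2 h : \sum_(a < dh) (WK2 dh d h *m X) a ord_max * (WQ2 dh d *m X) a ord_max =
  if h == r then - (TT + TT) else 0.
Proof.
have H0 : (0 < dh)%N by lia.
rewrite (sum2o H0 Hdh) //; last by move=> a Ha0 Ha1; rewrite KX2 (negbTE Ha0) (negbTE Ha1) mul0r.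
by rewrite !KX2 !QX2 /= mul0r add0r mulr1.
Qed.

Definition ee : R := expR (- TT).

Definition m2 : R := \sum_(h < nR) 2 * (g h s : nat)%:R * (ee / (ee + (if h == r then ee * ee else 1))).

Lemma X2 (k : 'I_d) : (layer_nomlp (hs2 dh d) X) k ord_max =
  (if (k : nat) == 0%N then m2 else 0) + frel r k.
Proof.
rewrite mxE attn_last /= [X k ord_max]mxE /= mxE /=; congr (_ + _).
rewrite /m2; case: ifP => Hk.
  apply: eq_bigr => h _; rewrite !VX2 /= Hk /= S0_2 S1_2 mul0r addr0 -mulrA /ee; congr (_ * (_ / _)).
  case: eqP => _; last by rewrite expR0.
  by rewrite opprD expRD.
by apply: big1 => h _; rewrite !VX2 Hk /= !mul0r add0r mul0r.
Qed.

End P2.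

Lemma part2 d dh (Hd : (0 < nR)%N -> (2 * nR + 3 <= d)%N) (Hdh : (2 <= dh)%N) :
  exists (E : token N nR -> 'cV[R]_d) (hs : 'I_nR -> attn_head R d dh),
     forall (s : 'I_N) (r : 'I_nR),
       predicts E (layer_nomlp hs (input_seq E s r)) (inl (g r s)).
Proof.
exists (Emb d true), (hs2 dh d) => s r.
have HnR : (0 < nR)%N by apply: leq_ltn_trans (ltn_ord r).
have Hd' := Hd HnR.
have hr := ltn_ord r.
have Hc : col ord_max (layer_nomlp (hs2 dh d) (input_seq (Emb d true) s r))
          = \col_(k < d) ((if (k : nat) == 0%N then m2 s r else 0) + frel r k).
  by apply/matrixP => k j; rewrite [LHS]mxE [RHS]mxE (X2 _ _ Hd' Hdh).
set G : R := \sum_(h < nR | h != r) (g h s : nat)%:R.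
have He : 0 < ee by apply: expR_gt0.
have Hm2 : m2 s r = (2 * (g r s : nat)%:R + 2 * ee * G) / (1 + ee).
  rewrite /m2 (bigD1 r) //= eqxx.
  rewrite (eq_bigr (fun h => (g h s : nat)%:R * (2 * ee / (ee + 1)))); last first.
    by move=> h /negbTE ->; rewrite !mulrA [_ * 2]mulrC.
  rewrite -mulr_suml -/G.
  field.
  by apply/andP; split; rewrite gt_eqF //; nra.
have HeT : ee * (1 + TT) <= 1.
  rewrite /ee expRN mulrC ler_pdivrMr ?expR_gt0 // mul1r.
  exact: expR_ge1Dx.
have HT0 : 0 <= TT by rewrite /TT ler0n.
have He1 : ee <= 1 by nra.
have HG0 : 0 <= G by apply: sumr_ge0 => h _; rewrite ler0n.
have HGT : 2 * G <= TT.
  have : G <= \sum_(h < nR) (N%:R : R).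
    apply: le_trans (_ : \sum_(h < nR) (g h s : nat)%:R <= _).
      by rewrite [leRHS](bigD1 r) //= lerDr ler0n.
    by apply: ler_sum => h _; rewrite ler_nat ltnW.
  rewrite sumr_const card_ord /TT -mulnA natrM -mulr_natr -natrM mulnC => HG.
  lra.
rewrite /predicts Hc => t Ht.
have HB : forall k, (2 <= k < 2 + nR)%N -> (if k == 0%N then m2 s r else 0) + frel r k = 0.
  by move=> k Hk; rewrite /frel; crush.
have HZ : true -> forall k, k = (2 + 2 * nR)%N -> (if k == 0%N then m2 s r else 0) + frel r k = 0.
  by move=> _ k ->; rewrite /frel; crush.
set x2 := fun k : nat => (if k == 0%N then m2 s r else 0) + frel r k.
change (\col_(k < d) ((if (k : nat) == 0%N then m2 s r else 0) + frel r k)) with (\col_(k < d) x2 k).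
rewrite dot_sub //; last by lia.
have e0 : x2 0%N = m2 s r by rewrite /x2 /frel /= addr0.
have e1 : x2 1%N = 1 by rewrite /x2 /frel /= add0r.
rewrite e0 e1 mulr1 Hm2.
case: t Ht => [y|r'] Ht.
  rewrite dot_sub //; last by lia.
  rewrite e0 e1 mulr1 Hm2.
  have Hy : (y : nat) != g r s by apply: contra Ht => /eqP e; apply/eqP; congr inl; apply: val_inj.
  have hy := ltn_ord y; have hg := ltn_ord (g r s).
  apply: (key (T := TT)) => //.
  - by rewrite -natrD /TT ler_nat; nia.
  - case: (ltngtP y (g r s)) Hy => // H _.
      by right; rewrite natr1 ler_nat.
    by left; rewrite natr1 ler_nat.
rewrite dot_rel; last by lia.
rewrite e1.
have Hb : x2 (2 + nR + r')%N <= 1.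
  have := ltn_ord r'; rewrite /x2 /frel /= => ?; crush.
apply: (le_lt_trans (lerD (lexx 1) Hb)).
apply: key2 => //.
Qed.

Definition E0 d : token N nR -> 'cV[R]_d := fun t =>
  \col_(k < d) (match t with inl _ => if (k : nat) == 0%N then 1 else 0 | inr _ => 0 end).

Lemma pred0 d (HN : (N <= 1)%N) (Hd : (0 < d)%N) (c : R) (Hc : 0 < c) (Xo : 'M[R]_(d, 2)) y :
  col ord_max Xo = \col_(k < d) (if (k : nat) == 0%N then c else 0) ->
  predicts (E0 d) Xo (inl y).
Proof.
move=> HX t Ht; rewrite HX /dotv.
rewrite [X in _ < X](sum1o Hd); last by move=> k Hk; rewrite !mxE (negbTE Hk) mul0r.
rewrite !mxE /= mul1r.
case: t Ht => [y'|r'] Ht.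
  exfalso; move/negP: Ht; apply; apply/eqP; congr inl; apply: val_inj.
  by change ((y' : nat) = y); have := ltn_ord y; have := ltn_ord y'; move=> ? ?; lia.
under eq_bigr do rewrite !mxE mul0r.
by rewrite big1_eq.
Qed.

Lemma zero_attn d dh H (hs : 'I_H -> attn_head R d dh) (X : 'M[R]_(d, 2)) :
  (forall h, WK (hs h) = 0) -> forall h (i : 'I_2),
  \sum_(a < dh) (WK (hs h) *m X) a i * (WQ (hs h) *m X) a ord_max = 0.
Proof. by move=> HK h i; apply: big1 => a _; rewrite HK mul0mx mxE mul0r. Qed.

Lemma part1s d (HN : (N <= 1)%N) (Hd : (0 < d)%N) :
  exists (E : token N nR -> 'cV[R]_d) (hs : 'I_1 -> attn_head R d d) (m : mlp3 R d nR),
     forall (s : 'I_N) (r : 'I_nR),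
       predicts E (layer_mlp hs m (input_seq E s r)) (inl (g r s)).
Proof.
exists (E0 d), (fun _ => Head 0 0 0), (MLP3 0 0 0 0 0 (\col_(k < d) (if (k : nat) == 0%N then 1 else 0))).
move=> s r; apply: (pred0 HN Hd ltr01).
apply/matrixP => k j; rewrite [LHS]mxE [RHS]mxE /layer_mlp mxE mxE mxE attn_last.
rewrite /mlp3_cols /mlp3_apply /= !mul0mx [X in _ + X]mxE !mul0mx add0r [X in _ + X]mxE.
rewrite big1; last by move=> h _; rewrite !mxE !mul0r add0r mul0r.
by rewrite !mxE !add0r.
Qed.

Lemma part2s d dh (HN : (N <= 1)%N) (Hd : (0 < d)%N) :
  exists (E : token N nR -> 'cV[R]_d) (hs : 'I_nR -> attn_head R d dh),
     forall (s : 'I_N) (r : 'I_nR),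
       predicts E (layer_nomlp hs (input_seq E s r)) (inl (g r s)).
Proof.
exists (E0 d), (fun _ => Head 0 0 1%:M) => s r.
have HnR : (0 < nR)%N by apply: leq_ltn_trans (ltn_ord r).
apply: (pred0 (c := nR%:R / 2) HN Hd).
  by apply: divr_gt0; rewrite ?ltr0n.
apply/matrixP => k j; rewrite [LHS]mxE [RHS]mxE /layer_nomlp mxE attn_last.
rewrite !(zero_attn (hs := fun _ : 'I_nR => Head 0 0 1%:M)) // expR0 /= !mul1mx.
rewrite !mxE /= !mulr1 !addr0 sumr_const card_ord.
case: ifP => _; last by rewrite mul0r mul0rn.
by rewrite -mulr_natr; field.
Qed.

End Constr.

Theorem theorem1 (R : realType) (N nR : nat) (g : 'I_nR -> 'I_N -> 'I_N) :
  (forall r, bijective (g r)) ->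
  (* 1 layer, single attention head, MLP with 3 layers and width nR,
     embedding dimension d = 4 nR log N + 1 *)
  (exists (E : token N nR -> 'cV[R]_(4 * nR * clog2 N + 1)%N)
          (hs : 'I_1 -> attn_head R (4 * nR * clog2 N + 1)%N (4 * nR * clog2 N + 1)%N)
          (m : mlp3 R (4 * nR * clog2 N + 1)%N nR),
     forall (s : 'I_N) (r : 'I_nR),
       predicts E (layer_mlp hs m (input_seq E s r)) (inl (g r s)))
  /\
  (* 1 layer, no MLP, nR heads of head dimension 4 log N,
     embedding dimension d = 4 nR log N + 4 log nR + 1 *)
  (exists (E : token N nR -> 'cV[R]_(4 * nR * clog2 N + 4 * clog2 nR + 1)%N)
          (hs : 'I_nR -> attn_head R (4 * nR * clog2 N + 4 * clog2 nR + 1)%N (4 * clog2 N)%N),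
     forall (s : 'I_N) (r : 'I_nR),
       predicts E (layer_nomlp hs (input_seq E s r)) (inl (g r s))).
Proof.
move=> _.
case: (leqP N 1) => HN.
  split.
    by apply: part1s => //; rewrite addn1.
  by apply: part2s => //; rewrite addn1.
have Hc : (0 < clog2 N)%N by rewrite /clog2 up_log_gt0 HN.
have H4 : (nR <= nR * clog2 N)%N by rewrite leq_pmulr.
rewrite -!mulnA.
split.
  by apply: part1 => Hn; lia.
by apply: part2 => [Hn|]; lia.
Qed.
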